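(* Let $S$ be a finite relational signature and let $M=\{(\phi_1,w_1),\ldots,(\phi_h,w_h)\}$ be a Markov logic network over $S$ such that for each $i$, any two atoms appearing in $\phi_i$ contain exactly the same variables. Then the family $\{Q^{(n)}\mid n\in\mathbb{N}\}$ of distributions defined by $M$ is a projective random relational structure model.
   Context: A relational signature $S$ is a set of relation symbols with arities, written $r/k$. For $n\in\mathbb{N}$ let $[n]=\{0,\ldots,n-1\}$ and let $\Omega^{(n)}$ be the set of possible worlds for $S$ over domain $[n]$, i.e. truth assignments to all ground atoms $r(\mathbf{i})$, $r/k\in S$, $\mathbf{i}\in[n]^k$. A random relational structure model (RRSM) is a family $\{Q^{(n)}\mid n\in\mathbb{N}\}$ with $Q^{(n)}$ a probability distribution on $\Omega^{(n)}$. $Q^{(n)}$ is exchangeable if $Q^{(n)}(\omega)=Q^{(n)}(\omega')$ whenever $\omega,\omega'$ are isomorphic. For $m\le n$, $Q^{(n)}\downarrow[m]$ is the marginal distribution of $Q^{(n)}$ on the ground atoms with all arguments in $[m]$ (a distribution on $\Omega^{(m)}$). An RRSM is projective if every $Q^{(n)}$ is exchangeable and $Q^{(n)}\downarrow[m]=Q^{(m)}$ for all $m<n$. A Markov logic network (MLN) is a finite set of pairs $(\phi_i,w_i)$ where $w_i\in\mathbb{R}$ and $\phi_i(X_1,\ldots,X_{k_i})$ is a quantifier-free formula built with Boolean connectives from atoms $r(Y_1,\ldots,Y_l)$, $r/l\in S$, whose arguments are variables among $X_1,\ldots,X_{k_i}$ (no domain constants). For $\omega\in\Omega^{(n)}$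 let $n_i(\omega)$ be the number of tuples $\mathbf{j}\in[n]^{k_i}$ such that $\phi_i(\mathbf{j})$ is true in $\omega$. The MLN defines $Q^{(n)}(\omega)=\frac{1}{Z_n}\exp\big(\sum_i w_i n_i(\omega)\big)$, with $Z_n$ the normalizing constant. *)

(* Defs.v *)
From HB Require Import structures.
From mathcomp Require Import all_boot all_order all_algebra all_fingroup.
From mathcomp Require Import all_classical all_reals.
From mathcomp Require Import sequences exp.
Set Implicit Arguments. Unset Strict Implicit. Unset Printing Implicit Defensive.
Import Order.TTheory GRing.Theory Num.Theory.
Local Open Scope ring_scope.

(* A finite relational signature is given by the list of arities of its
   relation symbols; the symbols are the indices 'I_(size S). *)
Definition signature := seq nat.
Definition rel (S : signature) := 'I_(size S).
Definition arity (S : signature) (r : rel S) : nat := nth 0%N S r.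

(* Ground atoms r(i) over domain [n] (= 'I_n).  With n := k this also
   represents atoms r(X_...) over the variables X_0..X_{k-1}. *)
Definition atom (S : signature) (n : nat) : finType :=
  {r : rel S & (arity r).-tuple 'I_n}.

Definition world (S : signature) (n : nat) : finType := {ffun atom S n -> bool}.

Inductive formula (S : signature) (k : nat) : Type :=
  | FAtom (r : rel S) of (arity r).-tuple 'I_k
  | FTrue
  | FFalse
  | FNot of formula S k
  | FAnd of formula S k & formula S k
  | FOr of formula S k & formula S k
  | FImp of formula S k & formula S k
  | FIff of formula S k & formula S k.

Fixpoint atoms (S : signature) (k : nat) (phi : formula S k) : seq (atom S k) :=
  match phi with
  | FAtom r a => [:: Tagged (fun r => (arity r).-tuple 'I_k) a]
  | FTrue | FFalse => [::]
  | FNot p => atoms p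
  | FAnd p q | FOr p q | FImp p q | FIff p q => atoms p ++ atoms q
  end.

Fixpoint holds (S : signature) (k n : nat) (phi : formula S k)
    (w : world S n) (j : k.-tuple 'I_n) : bool :=
  match phi with
  | FAtom r a => w (Tagged (fun r => (arity r).-tuple 'I_n) (map_tuple (tnth j) a))
  | FTrue => true
  | FFalse => false
  | FNot p => ~~ holds p w j
  | FAnd p q => holds p w j && holds q w j
  | FOr p q => holds p w j || holds q w j
  | FImp p q => holds p w j ==> holds q w j
  | FIff p q => holds p w j == holds q w j
  end.

Definition nsat (S : signature) (k n : nat) (phi : formula S k) (w : world S n) : nat :=
  #|[set j : k.-tuple 'I_n | holds phi w j]|.

Record wformula (S : signature) (R : realType) := WFormula {
  wf_k : nat;
  wf_phi : formula S wf_k;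
  wf_w : R }.

Definition MLN (S : signature) (R : realType) := seq (wformula S R).

Definition mln_weight (S : signature) (R : realType) (M : MLN S R) (n : nat)
    (w : world S n) : R :=
  expR (\sum_(c <- M) wf_w c * (nsat (wf_phi c) w)%:R).

Definition mln_Z (S : signature) (R : realType) (M : MLN S R) (n : nat) : R :=
  \sum_(w : world S n) mln_weight M w.

Definition mln_dist (S : signature) (R : realType) (M : MLN S R) (n : nat)
    (w : world S n) : R :=
  mln_weight M w / mln_Z M n.

Definition RRSM (S : signature) (R : realType) := forall n : nat, world S n -> R.

Definition is_distribution (S : signature) (R : realType) (n : nat)
    (P : world S n -> R) : Prop :=
  (forall w, 0 <= P w) /\ \sum_(w : world S n) P w = 1.

Definition isomorphic (S : signature) (n : nat) (w w' : world S n) : Prop :=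
  exists pi : {perm 'I_n}, forall (r : rel S) (a : (arity r).-tuple 'I_n),
    w (Tagged (fun r => (arity r).-tuple 'I_n) a)
    = w' (Tagged (fun r => (arity r).-tuple 'I_n) (map_tuple pi a)).

Definition exchangeable (S : signature) (R : realType) (n : nat)
    (P : world S n -> R) : Prop :=
  forall w w' : world S n, isomorphic w w' -> P w = P w'.

Definition restrict (S : signature) (m n : nat) (H : (m <= n)%N)
    (w : world S n) : world S m :=
  [ffun a : atom S m =>
     w (Tagged (fun r => (arity r).-tuple 'I_n) (map_tuple (widen_ord H) (tagged a)))].

Definition marginal (S : signature) (R : realType) (m n : nat) (H : (m <= n)%N)
    (P : world S n -> R) (v : world S m) : R :=
  \sum_(w : world S n | restrict H w == v) P w.

Definition projective (S : signature) (R : realType) (Q : RRSM S R) : Prop :=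
  (forall n, is_distribution (Q n)) /\
  (forall n, exchangeable (Q n)) /\
  (forall (m n : nat) (H : (m <= n)%N), (m < n)%N ->
     forall v : world S m, marginal H (Q n) v = Q m v).

(* Hypotheses on an MLN formula phi(X_0..X_{k-1}):
   - same_vars: any two atoms of phi contain exactly the same variables;
   - all_vars_occur: the variables X_0..X_{k-1} of phi are those occurring in it. *)
Definition same_vars (S : signature) (k : nat) (phi : formula S k) : Prop :=
  forall a b : atom S k, a \in atoms phi -> b \in atoms phi ->
    forall x : 'I_k, (x \in tagged a) = (x \in tagged b).

Definition all_vars_occur (S : signature) (k : nat) (phi : formula S k) : Prop :=
  forall x : 'I_k, exists2 a, a \in atoms phi & x \in tagged a.

(* Main.v *)
Require Import Defs.
From mathcomp Require Import all_boot all_order all_algebra all_fingroup.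
From mathcomp Require Import all_classical all_reals.
From mathcomp Require Import sequences exp.
Set Implicit Arguments. Unset Strict Implicit. Unset Printing Implicit Defensive.
Import Order.TTheory GRing.Theory Num.Theory.
Local Open Scope ring_scope.

Section Helpers.
Variable S : signature.

Definition ground k n (j : k.-tuple 'I_n) (a : atom S k) : atom S n :=
  Tagged (fun r => (arity r).-tuple 'I_n) (map_tuple (tnth j) (tagged a)).

Lemma holds_morph k n n' (f : 'I_n -> 'I_n') (phi : formula S k)
  (w : world S n) (w' : world S n') (j : k.-tuple 'I_n) :
  (forall (r : Defs.rel S) (a : (arity r).-tuple 'I_n),
     w (Tagged (fun r => (arity r).-tuple 'I_n) a)
     = w' (Tagged (fun r => (arity r).-tuple 'I_n') (map_tuple f a))) ->
  holds phi w j = holds phi w' (map_tuple f j).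
Proof.
move=> Hw; elim: phi => [r a| | |p IHp|p IHp q IHq|p IHp q IHq|p IHp q IHq|p IHp q IHq] /=;
  rewrite ?IHp ?IHq //.
rewrite Hw; congr (w' (Tagged _ _)); apply: eq_from_tnth => x.
by rewrite !tnth_map.
Qed.

Lemma holds_ext k n (phi : formula S k) (w1 w2 : world S n) (j : k.-tuple 'I_n) :
  (forall a, a \in atoms phi -> w1 (ground j a) = w2 (ground j a)) ->
  holds phi w1 j = holds phi w2 j.
Proof.
elim: phi => [r a| | |p IHp|p IHp q IHq|p IHp q IHq|p IHp q IHq|p IHp q IHq] /= H;
  rewrite ?IHp ?IHq //; try (by move=> a Ha; apply: H; rewrite mem_cat Ha ?orbT).
exact: (H _ (mem_head _ _)).
Qed.


Section Widen.
Variables (m n : nat) (H : (m <= n)%N).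

Definition widen_atom (b : atom S m) : atom S n :=
  Tagged (fun r => (arity r).-tuple 'I_n) (map_tuple (widen_ord H) (tagged b)).

Lemma map_widen_inj l : injective (@map_tuple l _ _ (widen_ord H)).
Proof.
move=> a1 a2 /(congr1 val) /= E; apply: val_inj => /=.
apply: (inj_map _ E) => x y /(congr1 val) /= E'; exact: val_inj.
Qed.

Lemma widen_atom_inj : injective widen_atom.
Proof.
move=> [r1 a1] [r2 a2] E.
have Er : r1 = r2 := congr1 tag E.
subst r2; move/eqP: E; rewrite /widen_atom /= eq_Tagged /= => /eqP E.
by rewrite (map_widen_inj E).
Qed.

Lemma restrictE (w : world S n) b : Defs.restrict H w b = w (widen_atom b).
Proof. by rewrite ffunE. Qed.

Definition ext (v : world S m) (w : world S n) : world S n :=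
  [ffun a => if [pick b | widen_atom b == a] is Some b then v b else w a].

Lemma restrict_ext v w : Defs.restrict H (ext v w) = v.
Proof.
apply/ffunP => b; rewrite restrictE ffunE.
case: pickP => [b' /eqP /widen_atom_inj -> //|/(_ b)]; by rewrite eqxx.
Qed.

Lemma ext_ext v v' w : ext v (ext v' w) = ext v w.
Proof.
apply/ffunP => a; rewrite !ffunE; case: pickP => // _; by rewrite ffunE; case: pickP.
Qed.

Lemma ext_id v w : Defs.restrict H w = v -> ext v w = w.
Proof.
move=> <-; apply/ffunP => a; rewrite ffunE; case: pickP => // b /eqP <-.
by rewrite restrictE.
Qed.

Definition args k (a : atom S k) : seq nat := map val (tagged a).

Lemma ext_new v w a : (exists2 i, i \in args a & ~~ (i < m)%N) -> ext v w a = w a.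
Proof.
case=> i Hi Him; rewrite ffunE; case: pickP => // b /eqP Eb.
move: Hi; rewrite -Eb /args /= -map_comp => /mapP [x _ Ex].
by move: Him; rewrite Ex /= ltn_ord.
Qed.


Definition oldt k (j : k.-tuple 'I_n) := all (fun i : 'I_n => (i < m)%N) j.
Definition nnew k (phi : formula S k) (w : world S n) :=
  #|[set j : k.-tuple 'I_n | holds phi w j & ~~ oldt j]|.

Lemma nsat_split k (phi : formula S k) w :
  nsat phi w = (nsat phi (Defs.restrict H w) + nnew phi w)%N.
Proof.
rewrite /nsat /nnew -(cardsID [set j | oldt j] [set j | holds phi w j]).
congr (_ + _)%N; last by apply: eq_card => j; rewrite !inE andbC.
have -> : [set j | holds phi w j] :&: [set j | oldt j] =
    map_tuple (widen_ord H) @: [set j' | holds phi (Defs.restrict H w) j'].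
  apply/setP => j; rewrite !inE.
  case/boolP: (oldt j) => Pj.
  - have Hx : forall x : 'I_k, (tnth j x < m)%N.
      by move=> x; apply: (allP Pj); apply: mem_tnth.
    have Ej : j = map_tuple (widen_ord H) [tuple Ordinal (Hx x) | x < k].
      by apply: eq_from_tnth => x; rewrite tnth_map tnth_mktuple; apply: val_inj.
    rewrite andbT Ej mem_imset; last exact: map_widen_inj.
    rewrite inE; symmetry; apply: holds_morph => r a; by rewrite ffunE.
  - rewrite andbF; apply/esym/imsetP => -[j' _ Ej]; move: Pj; rewrite Ej.
    move/negP; apply; apply/allP => i /mapP [x _ ->] /=; exact: ltn_ord.
by rewrite card_imset //; exact: map_widen_inj.
Qed.

Lemma nnew_ext k (phi : formula S k) v w :
  same_vars phi -> all_vars_occur phi -> nnew phi (ext v w) = nnew phi w.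
Proof.
move=> Hs Ho; apply: eq_card => j; rewrite !inE.
case/boolP: (oldt j) => Pj; rewrite ?andbF ?andbT //.
apply: holds_ext => a Ha; apply: ext_new.
case/allPn: Pj => i Hi Him; case/tnthP: Hi => x Ex.
exists (val i) => //.
have [b Hb Hxb] := Ho x.
have Hxa : x \in tagged a by rewrite (Hs a b Ha Hb).
rewrite /args /ground /=; apply: map_f; rewrite Ex; exact: map_f.
Qed.

End Widen.
End Helpers.


Section Weights.
Variables (S : signature) (R : realType) (M : MLN S R).

Definition Hn m n (H : (m <= n)%N) (w : world S n) : R :=
  expR (\sum_(c <- M) wf_w c * (nnew m (wf_phi c) w)%:R).

Lemma weight_split m n (H : (m <= n)%N) (w : world S n) :
  mln_weight M w = mln_weight M (Defs.restrict H w) * Hn H w.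
Proof.
rewrite /mln_weight /Hn -expRD -big_split /=; congr expR.
by apply: eq_bigr => c _; rewrite (nsat_split H) natrD mulrDr.
Qed.

Lemma Hn_ext m n (H : (m <= n)%N) v (w : world S n) :
  (forall i : 'I_(size M),
     same_vars (wf_phi (tnth (in_tuple M) i)) /\
     all_vars_occur (wf_phi (tnth (in_tuple M) i))) ->
  Hn H (ext H v w) = Hn H w.
Proof.
move=> HM; rewrite /Hn; congr expR.
rewrite !(big_tuple _ _ (in_tuple M)); apply: eq_bigr => i _.
by have [Hs Ho] := HM i; rewrite nnew_ext.
Qed.

End Weights.

Theorem mainTheorem2 (S : signature) (R : realType) (M : MLN S R) :
  (forall i : 'I_(size M),
     same_vars (wf_phi (tnth (in_tuple M) i)) /\
     all_vars_occur (wf_phi (tnth (in_tuple M) i))) ->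
  projective (fun n => @mln_dist S R M n).
Proof.
move=> HM.
have Wgt0 : forall n (w : world S n), 0 < mln_weight M w.
  by move=> *; exact: expR_gt0.
have Zgt0 : forall n, 0 < mln_Z M n.
  move=> n; rewrite /mln_Z (bigD1 [ffun => false]) //=.
  apply: (lt_le_trans (Wgt0 n [ffun=> false])); rewrite lerDl.
  by apply: sumr_ge0 => *; exact/ltW.
split; [|split].
- move=> n; split => [w|]; first by rewrite /mln_dist divr_ge0 // ltW.
  by rewrite /mln_dist -big_distrl /= -/(mln_Z M n) divff // (gt_eqF (Zgt0 n)).
- move=> n w w' [pi Hpi]; rewrite /mln_dist; congr (_ / _).
  rewrite /mln_weight; congr expR; apply: eq_bigr => c _.
  congr (_ * _%:R); rewrite /nsat.
  have inj : injective (@map_tuple (wf_k c) _ _ pi).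
    move=> a1 a2 /(congr1 val) /= E; apply: val_inj => /=.
    exact: (inj_map (@perm_inj _ pi) E).
  rewrite -(card_preimset [set j | holds (wf_phi c) w' j] inj).
  apply: eq_card => j; rewrite !inE; apply: holds_morph => r a; exact: Hpi.
- move=> m n H _ v; rewrite /marginal /mln_dist -big_distrl /=.
  pose v0 : world S m := [ffun => false].
  pose C := \sum_(j : world S n | ext H v0 j == j) Hn M H j.
  have key : forall v, \sum_(w | Defs.restrict H w == v) mln_weight M w
                       = mln_weight M v * C.
    move=> v'.
    rewrite (eq_bigr (fun w => mln_weight M v' * Hn M H w)); last first.
      by move=> w /eqP <-; rewrite (weight_split M H).
    rewrite -big_distrr /=; congr (_ * _).
    rewrite (reindex_onto (ext H v') (ext H v0)) /=; last first.
      by move=> w /eqP Ew; rewrite ext_ext ext_id.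
    apply: eq_big => [j|j _]; first by rewrite restrict_ext eqxx /= ext_ext.
    by rewrite Hn_ext.
  have ZC : mln_Z M n = mln_Z M m * C.
    rewrite /mln_Z (partition_big (Defs.restrict H) xpredT) //= big_distrl /=.
    by apply: eq_bigr => v' _; rewrite -key.
  have Cne : C != 0.
    by apply: contraTneq (Zgt0 n) => C0; rewrite ZC C0 mulr0 ltxx.
  rewrite key ZC invfM mulrACA divff // mulr1. 
  done.
Qed.
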